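(* Let $n\ge1$ and let $\mathcal B$ be a finite abstract $\mathfrak q_n$-crystal. Then its character $\mathrm{ch}(\mathcal B)=\sum_{b\in\mathcal B}x_1^{\mathrm{wt}(b)_1}\cdots x_n^{\mathrm{wt}(b)_n}$ lies in $\Gamma_n$.
   Context: An abstract $\mathfrak{gl}_n$-crystal is a set $\mathcal B$ with $\mathrm{wt}:\mathcal B\to\mathbb{Z}_{\ge0}^n$ and $e_i,f_i:\mathcal B\to\mathcal B\sqcup\{0\}$ ($i\in[n-1]$) such that $e_i(b)=c\iff f_i(c)=b$, in which case $\mathrm{wt}(c)=\mathrm{wt}(b)+\mathbf e_i-\mathbf e_{i+1}$, and $\varepsilon_i(b)=\max\{k:e_i^k(b)\ne0\}$, $\varphi_i(b)=\max\{k:f_i^k(b)\ne0\}$ are finite with $\varphi_i(b)-\varepsilon_i(b)=\mathrm{wt}(b)_i-\mathrm{wt}(b)_{i+1}$. For $n\ge2$ an abstract $\mathfrak q_n$-crystal is an abstract $\mathfrak{gl}_n$-crystal with maps $e_{\bar1},f_{\bar1}:\mathcal B\to\mathcal B\sqcup\{0\}$ such that: $e_{\bar1}(b)=c\iff f_{\bar1}(c)=b$, in which case $\mathrm{wt}(b)=\mathrm{wt}(c)+\mathbf e_2-\mathbf e_1$ and $\varepsilon_i(b)=\varepsilon_i(c)$, $\varphi_i(b)=\varphi_i(c)$ for $3\le i\le n-1$; $e_{\bar1},f_{\bar1}$ commute with $e_i,f_i$ for $3\le i\le n-1$ (all operators send $0$ to $0$); and, with $\varepsilon_{\bar1}(b)=\max\{k:e_{\bar1}^k(b)\ne0\}$,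 $\varphi_{\bar1}(b)=\max\{k:f_{\bar1}^k(b)\neq0\}$, one has $\varepsilon_{\bar1}(b)+\varphi_{\bar1}(b)\le1$ with equality if $\mathrm{wt}(b)_1\ne0$ or $\mathrm{wt}(b)_2\ne0$. An abstract $\mathfrak q_1$-crystal is any set with a weight map to $\mathbb{Z}_{\ge0}$. $\Lambda_n$ is the ring of symmetric polynomials in $\mathbb{Z}[x_1,\dots,x_n]$; for $n\ge2$, $\Gamma_n$ is the subring of $f\in\Lambda_n$ with $f(x_1,-x_1,x_3,\dots,x_n)\in\mathbb{Z}[x_3,\dots,x_n]$, and $\Gamma_1=\Lambda_1$. *)

(* Defs.v *)
From HB Require Import structures.
From mathcomp Require Import all_boot all_order all_algebra.
From mathcomp Require Import mpoly.
Set Implicit Arguments. Unset Strict Implicit. Unset Printing Implicit Defensive.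
Import GRing.Theory.
Local Open Scope ring_scope.

(* Conventions: coordinates and crystal indices are 0-indexed.
   The paper's operator e_i (i in [n-1]) is [e (i-1)], acting on coordinates
   i-1 and i (0-indexed); the paper's e_{\bar 1} is [ebar]. *)

Section Crystals.
Variables (n : nat) (B : finType).

Definition wtc (wt : B -> n.-tuple nat) (b : B) (j : nat) : nat := nth 0%N (wt b) j.

(* g^k(b), with 0 represented by None *)
Definition oiter (g : B -> option B) (k : nat) (b : B) : option B :=
  iter k (obind g) (Some b).

Definition is_max_iter (g : B -> option B) (b : B) (k : nat) : Prop :=
  oiter g k b <> None /\ oiter g k.+1 b = None.

Definition is_gl_crystal (wt : B -> n.-tuple nat) (e f : nat -> B -> option B) : Prop :=
  forall i : nat, (i.+1 < n)%N ->
    [/\ (forall b c, e i b = Some c <-> f i c = Some b),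
        (forall b c, e i b = Some c -> forall j : nat, (j < n)%N ->
            (wtc wt c j)%:Z = (wtc wt b j)%:Z + ((j == i) : nat)%:Z
                                 - ((j == i.+1) : nat)%:Z)
      & (forall b, exists keps kphi : nat,
            [/\ is_max_iter (e i) b keps, is_max_iter (f i) b kphi
              & kphi%:Z - keps%:Z = (wtc wt b i)%:Z - (wtc wt b i.+1)%:Z])].

Definition is_q_crystal (wt : B -> n.-tuple nat) (e f : nat -> B -> option B)
    (ebar fbar : B -> option B) : Prop :=
  is_gl_crystal wt e f /\
  ((2 <= n)%N ->
   [/\ (forall b c, ebar b = Some c <-> fbar c = Some b),
       (forall b c, ebar b = Some c ->
          (forall j : nat, (j < n)%N ->
            (wtc wt b j)%:Z = (wtc wt c j)%:Z + ((j == 1%N) : nat)%:Z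
                                 - ((j == 0%N) : nat)%:Z) /\
          (forall i : nat, (2 <= i)%N -> (i.+1 < n)%N ->
             (forall k, is_max_iter (e i) b k <-> is_max_iter (e i) c k) /\
             (forall k, is_max_iter (f i) b k <-> is_max_iter (f i) c k))),
       (forall i : nat, (2 <= i)%N -> (i.+1 < n)%N -> forall b,
          [/\ obind ebar (e i b) = obind (e i) (ebar b),
              obind ebar (f i b) = obind (f i) (ebar b),
              obind fbar (e i b) = obind (e i) (fbar b)
            & obind fbar (f i b) = obind (f i) (fbar b)])
     & (forall b, exists keps kphi : nat,
          [/\ is_max_iter ebar b keps, is_max_iter fbar b kphi,
              (keps + kphi <= 1)%N
            & (wtc wt b 0 != 0%N) || (wtc wt b 1 != 0%N) -> (keps + kphi = 1)%N])]).

Definition character (wt : B -> n.-tuple nat) : {mpoly int[n]} :=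
  \sum_(b : B) \prod_(j < n) 'X_j ^+ (tnth (wt b) j).

End Crystals.

(* substitution x_1 -> x_1, x_2 -> -x_1, x_j -> x_j (j >= 3); 0-indexed *)
Definition gamma_subst (n : nat) : n.-tuple {mpoly int[n]} :=
  [tuple if val j == 1%N
         then - 'X_(Ordinal (leq_ltn_trans (leq0n j) (ltn_ord j)))
         else 'X_j | j < n].

Definition Lambda (n : nat) (p : {mpoly int[n]}) : Prop := p \is symmetric.

Definition Gamma (n : nat) (p : {mpoly int[n]}) : Prop :=
  Lambda p /\
  ((2 <= n)%N -> forall m, m \in msupp (p \mPo gamma_subst n) ->
      forall j : 'I_n, (val j < 2)%N -> m j = 0%N).

(* Main.v *)
Require Import Defs.
From HB Require Import structures.
From mathcomp Require Import all_boot all_order all_algebra.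
From mathcomp Require Import mpoly.
From mathcomp Require Import fingroup perm zify ring.
Set Implicit Arguments. Unset Strict Implicit. Unset Printing Implicit Defensive.
Import GRing.Theory Num.Theory.
Local Open Scope ring_scope.


Section Oiter.
Variables (B : finType).
Implicit Types (g h : B -> option B).

Lemma iter_none g k : iter k (obind g) None = None.
Proof. by elim: k => //= k ->. Qed.

Lemma oiterS g k b : oiter g k.+1 b = obind g (oiter g k b).
Proof. by []. Qed.

Lemma oiterSr g k b : oiter g k.+1 b = obind (oiter g k) (g b).
Proof.
rewrite /oiter iterSr /=; case: (g b) => //=; exact: iter_none.
Qed.

Lemma oiter_mono g k l b : oiter g (l + k) b <> None -> oiter g k b <> None.
Proof.
rewrite /oiter iterD => H E; apply: H; rewrite E; exact: iter_none.
Qed.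

Lemma oiter_inv g h : (forall x y, g x = Some y <-> h y = Some x) ->
  forall k x y, oiter g k x = Some y -> oiter h k y = Some x.
Proof.
move=> Hgh; elim=> [|k IH] x y.
  by rewrite /oiter /= => -[->].
rewrite (oiterSr h) (oiterS g); case E: (oiter g k x) => [z|] //= gz.
by rewrite (proj1 (Hgh _ _) gz) /=; apply: IH.
Qed.

Lemma oiter_wt n (wt : B -> n.-tuple nat) g (del : nat -> int) :
  (forall x y, g x = Some y -> forall j, (j < n)%N ->
      (wtc wt y j)%:Z = (wtc wt x j)%:Z + del j) ->
  forall k x y, oiter g k x = Some y -> forall j, (j < n)%N ->
      (wtc wt y j)%:Z = (wtc wt x j)%:Z + del j * k%:Z.
Proof.
move=> Hg; elim=> [|k IH] x y.
  by rewrite /oiter /= => -[->] j _; rewrite mulr0 addr0.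
rewrite oiterS; case E: (oiter g k x) => [z|] //= gz j hj.
rewrite (Hg _ _ gz j hj) (IH _ _ E j hj).
rewrite -[k.+1]addn1 PoszD mulrDr mulr1; lia.
Qed.

Lemma oiter_some g k b : oiter g k b <> None -> exists c, oiter g k b = Some c.
Proof. by case: (oiter g k b) => [c|] // _; exists c. Qed.

End Oiter.

Lemma perm_adj_ind n (P : 'S_n -> Prop) :
  P 1%g -> (forall s t, P s -> P t -> P (s * t)%g) ->
  (forall i j : 'I_n, val j = (val i).+1 -> P (tperm i j)) -> forall s, P s.
Proof.
move=> P1 PM Padj.
have step : forall d (i j : 'I_n), val j = (val i + d.+1)%N -> P (tperm i j).
  elim=> [|d IH] i j hij; first by apply: Padj; rewrite hij addn1.
  have hk : (val i + d.+1 < n)%N by rewrite (leq_ltn_trans _ (ltn_ord j)) // hij; lia.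
  pose k := Ordinal hk.
  have Pik : P (tperm i k) by apply: IH.
  have Pkj : P (tperm k j) by apply: Padj => /=; move: hij => /=; lia.
  have -> : tperm i j = ((tperm k j)^-1 * (tperm i k * tperm k j))%g.
    have ne1 : k != i by apply/negP => /eqP/(congr1 val) /=; lia.
    have ne2 : j != i by apply/negP => /eqP/(congr1 val) /=; move: hij => /=; lia.
    by rewrite -[RHS]/(tperm i k ^ tperm k j)%g tpermJ tpermL tpermD.
  by rewrite tpermV; apply: (PM _ _ Pkj (PM _ _ Pik Pkj)).
have Pall : forall i j : 'I_n, P (tperm i j).
  move=> i j; case: (ltngtP (val i) (val j)) => h.
  - by apply: (step (val j - val i).-1); lia.
  - by rewrite tpermC; apply: (step (val i - val j).-1); lia.
  - have -> : i = j by apply: val_inj.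
    by rewrite tperm1.
move=> s; have [ts -> _] := prod_tpermP s.
elim: ts => [|t ts IH]; first by rewrite big_nil.
by rewrite big_cons; apply: PM.
Qed.

Lemma gl_swap n (B : finType) (wt : B -> n.-tuple nat) (e f : nat -> B -> option B)
  i : (i.+1 < n)%N -> is_gl_crystal wt e f ->
  exists sigma : B -> B, injective sigma /\ forall b j, (j < n)%N ->
    wtc wt (sigma b) j = wtc wt b (if j == i then i.+1 else if j == i.+1 then i else j).
Proof.
move=> Hi H; have [Hef Hwe Hstr] := H i Hi.
pose del (j : nat) : int := ((j == i) : nat)%:Z - ((j == i.+1) : nat)%:Z.
have We : forall k x y, oiter (e i) k x = Some y -> forall j, (j < n)%N ->
    (wtc wt y j)%:Z = (wtc wt x j)%:Z + del j * k%:Z.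
  apply: oiter_wt => x y hxy j hj; rewrite (Hwe _ _ hxy j hj) /del; lia.
have Wf : forall k x y, oiter (f i) k x = Some y -> forall j, (j < n)%N ->
    (wtc wt y j)%:Z = (wtc wt x j)%:Z + (- del j) * k%:Z.
  apply: oiter_wt => x y hxy j hj.
  rewrite (Hwe _ _ (proj2 (Hef _ _) hxy) j hj) /del; lia.
have Hfe : forall x y, f i x = Some y <-> e i y = Some x.
  by move=> x y; split => /Hef.
have exf : forall b, (wtc wt b i.+1 <= wtc wt b i)%N ->
    exists c, oiter (f i) (wtc wt b i - wtc wt b i.+1) b = Some c.
  move=> b hb; apply: oiter_some.
  have [keps [kphi [[_ _] [hphi _] hd]]] := Hstr b.
  apply: (@oiter_mono _ _ _ (kphi - (wtc wt b i - wtc wt b i.+1))).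
  have -> : ((kphi - (wtc wt b i - wtc wt b i.+1)) + (wtc wt b i - wtc wt b i.+1))%N = kphi by lia.
  exact: hphi.
have exe : forall b, (wtc wt b i < wtc wt b i.+1)%N ->
    exists c, oiter (e i) (wtc wt b i.+1 - wtc wt b i) b = Some c.
  move=> b hb; apply: oiter_some.
  have [keps [kphi [[heps _] [_ _] hd]]] := Hstr b.
  apply: (@oiter_mono _ _ _ (keps - (wtc wt b i.+1 - wtc wt b i))).
  have -> : ((keps - (wtc wt b i.+1 - wtc wt b i)) + (wtc wt b i.+1 - wtc wt b i))%N = keps by lia.
  exact: heps.
pose sigma b := if (wtc wt b i.+1 <= wtc wt b i)%N
  then odflt b (oiter (f i) (wtc wt b i - wtc wt b i.+1) b)
  else odflt b (oiter (e i) (wtc wt b i.+1 - wtc wt b i) b).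
have Wsig : forall b j, (j < n)%N ->
    wtc wt (sigma b) j = wtc wt b (if j == i then i.+1 else if j == i.+1 then i else j).
  move=> b j hj; rewrite /sigma.
  have hi0 : (i < n)%N by lia.
  case: ifP => hb.
    have [c hc] := exf b hb; rewrite hc /=.
    have Wj := Wf _ _ _ hc j hj; have Wi := Wf _ _ _ hc i hi0; have Wi1 := Wf _ _ _ hc i.+1 Hi.
    move: Wj Wi Wi1; rewrite /del.
    case: (eqVneq j i) => [->|ne1]; first by rewrite ?eqxx /= ?(gtn_eqF (ltnSn i)) ?(ltn_eqF (ltnSn i)) /=; lia.
    case: (eqVneq j i.+1) => [->|ne2]; first by rewrite ?eqxx /= ?(gtn_eqF (ltnSn i)) ?(ltn_eqF (ltnSn i)) /=; lia.
    rewrite ?eqxx /= ?(gtn_eqF (ltnSn i)) ?(ltn_eqF (ltnSn i)) /=; lia.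
  have hb' : (wtc wt b i < wtc wt b i.+1)%N by rewrite ltnNge hb.
  have [c hc] := exe b hb'; rewrite hc /=.
  have Wj := We _ _ _ hc j hj; have Wi := We _ _ _ hc i hi0; have Wi1 := We _ _ _ hc i.+1 Hi.
  move: Wj Wi Wi1; rewrite /del.
  case: (eqVneq j i) => [->|ne1]; first by rewrite ?eqxx /= ?(gtn_eqF (ltnSn i)) ?(ltn_eqF (ltnSn i)) /=; lia.
  case: (eqVneq j i.+1) => [->|ne2]; first by rewrite ?eqxx /= ?(gtn_eqF (ltnSn i)) ?(ltn_eqF (ltnSn i)) /=; lia.
  rewrite ?eqxx /= ?(gtn_eqF (ltnSn i)) ?(ltn_eqF (ltnSn i)) /=; lia.
exists sigma; split=> // b1 b2 E.
have hi0 : (i < n)%N by lia.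
have E1 := Wsig b1 i hi0; have E2 := Wsig b2 i hi0.
have E3 := Wsig b1 i.+1 Hi; have E4 := Wsig b2 i.+1 Hi.
rewrite eqxx in E1 E2; rewrite eqxx (gtn_eqF (ltnSn i)) in E3 E4.
rewrite E in E1 E3.
have e1 : wtc wt b1 i = wtc wt b2 i by lia.
have e2 : wtc wt b1 i.+1 = wtc wt b2 i.+1 by lia.
move: E; rewrite /sigma e1 e2; case: ifP => hb.
  have hb1 : (wtc wt b1 i.+1 <= wtc wt b1 i)%N by rewrite e1 e2.
  have [c1 h1] := exf b1 hb1.
  have [c2 h2] := exf b2 hb.
  rewrite e1 e2 in h1; rewrite h1 h2 /= => ec; subst c2.
  have := oiter_inv Hfe h1; have := oiter_inv Hfe h2; congruence.
have hb' : (wtc wt b2 i < wtc wt b2 i.+1)%N by rewrite ltnNge hb.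
have hb1 : (wtc wt b1 i < wtc wt b1 i.+1)%N by rewrite e1 e2.
have [c1 h1] := exe b1 hb1.
have [c2 h2] := exe b2 hb'.
rewrite e1 e2 in h1; rewrite h1 h2 /= => ec; subst c2.
have Hef' : forall x y, e i x = Some y <-> f i y = Some x by [].
have := oiter_inv Hef' h1; have := oiter_inv Hef' h2; congruence.
Qed.

Definition monb n (B : finType) (wt : B -> n.-tuple nat) (b : B) : 'X_{1..n} :=
  [multinom wtc wt b j | j < n].

Lemma charE n (B : finType) (wt : B -> n.-tuple nat) :
  character wt = \sum_(b : B) 'X_[monb wt b].
Proof.
apply: eq_bigr => b _; rewrite mpolyXE_id; apply: eq_bigr => j _.
by rewrite /monb mnmE /wtc (tnth_nth 0%N).
Qed.

Lemma char_sym n (B : finType) (wt : B -> n.-tuple nat) e f :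
  is_gl_crystal wt e f -> character wt \is symmetric.
Proof.
move=> H; apply/issymP; apply: perm_adj_ind.
- exact: msym1m.
- by move=> s t hs ht; rewrite msymMm hs ht.
move=> i j hij.
have Hi : ((val i).+1 < n)%N by rewrite -hij ltn_ord.
have [sigma [sinj Ws]] := gl_swap Hi H.
rewrite charE raddf_sum /=.
rewrite [RHS](reindex_inj sinj) /=; apply: eq_bigr => b _.
rewrite msymX tpermV; congr 'X_[_]; apply/mnmP => k.
rewrite /monb !mnmE Ws //.
case: tpermP => [->|->|ne1 ne2]; first by rewrite eqxx hij.
  by rewrite hij (gtn_eqF (ltnSn _)) eqxx.
have h1 : (val k == val i) = false by apply/negP => /eqP/val_inj.
have h2 : (val k == (val i).+1) = false by rewrite -hij; apply/negP => /eqP/val_inj.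
by rewrite h1 h2.
Qed.

Section G.
Variables (n : nat) (B : finType) (wt : B -> n.-tuple nat).
Hypothesis n2 : (2 <= n)%N.

Definition Tb (b : B) : {mpoly int[n]} :=
  \prod_(j < n) (tnth (gamma_subst n) j) ^+ (monb wt b j).

Lemma compE : character wt \mPo gamma_subst n = \sum_b Tb b.
Proof.
rewrite charE raddf_sum; apply: eq_bigr => b _; exact: comp_mpolyX.
Qed.

Let i0 : 'I_n := Ordinal (leq_trans (isT : (0 < 2)%N) n2).
Let i1 : 'I_n := Ordinal (n2 : (1 < n)%N).

Lemma Tneg b c : (forall j, (j < n)%N ->
   (wtc wt b j)%:Z = (wtc wt c j)%:Z + ((j == 1%N) : nat)%:Z - ((j == 0%N) : nat)%:Z) ->
  Tb b = - Tb c.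
Proof.
move=> Hw.
have ne : i1 != i0 by [].
rewrite /Tb (bigD1 i0) // (bigD1 i1) //= [in RHS](bigD1 i0) // [in RHS](bigD1 i1) //=.
have -> : \prod_(j < n | (j != i0) && (j != i1)) tnth (gamma_subst n) j ^+ monb wt b j =
          \prod_(j < n | (j != i0) && (j != i1)) tnth (gamma_subst n) j ^+ monb wt c j.
  apply: eq_bigr => j /andP [h0 h1]; congr (_ ^+ _); rewrite /monb !mnmE.
  have h0' : val j != 0%N by apply: contra h0 => /eqP h; apply/eqP/val_inj.
  have h1' : val j != 1%N by apply: contra h1 => /eqP h; apply/eqP/val_inj.
  have := Hw _ (ltn_ord j); rewrite (negPf h0') (negPf h1') /=; lia.
rewrite /monb !mnmE !tnth_mktuple /=.
have -> : Ordinal (leq_ltn_trans (leq0n 1) (ltn_ord i1)) = i0 by apply: val_inj.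
have H0 := Hw 0%N (ltn_ord i0); have H1 := Hw 1%N (ltn_ord i1).
simpl in H0, H1.
have -> : wtc wt c 0 = (wtc wt b 0).+1 by lia.
have -> : wtc wt b 1 = (wtc wt c 1).+1 by lia.
rewrite !exprS; ring.
Qed.

Lemma Tfix b : wtc wt b 0 = 0%N -> wtc wt b 1 = 0%N -> Tb b = 'X_[monb wt b].
Proof.
move=> h0 h1; rewrite /Tb mpolyXE_id; apply: eq_bigr => j _.
rewrite tnth_mktuple; case: ifP => // /eqP hj.
rewrite /monb mnmE.
have -> : wtc wt b j = 0%N by rewrite hj.
by rewrite !expr0.
Qed.

End G.

Lemma gamma2 n (B : finType) (wt : B -> n.-tuple nat) (ebar fbar : B -> option B)
  (n2 : (2 <= n)%N) :
  (forall b c, ebar b = Some c <-> fbar c = Some b) ->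
  (forall b c, ebar b = Some c -> forall j : nat, (j < n)%N ->
            (wtc wt b j)%:Z = (wtc wt c j)%:Z + ((j == 1%N) : nat)%:Z
                                 - ((j == 0%N) : nat)%:Z) ->
  (forall b, exists keps kphi : nat,
          [/\ is_max_iter ebar b keps, is_max_iter fbar b kphi,
              (keps + kphi <= 1)%N
            & (wtc wt b 0 != 0%N) || (wtc wt b 1 != 0%N) -> (keps + kphi = 1)%N]) ->
  forall m, m \in msupp (character wt \mPo gamma_subst n) ->
      forall j : 'I_n, (val j < 2)%N -> m j = 0%N.
Proof.
move=> Hbar Hw Hstr m hm j hj.
apply/eqP; move: hm; apply: contraTT => hmj.
have eN : forall b c, ebar b = Some c -> ebar c = None.
  move=> b c hbc; have hcb := proj1 (Hbar _ _) hbc.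
  have [keps [kphi [[he1 he2] [hf1 hf2] hle _]]] := Hstr c.
  case: kphi hf1 hf2 hle => [|kphi] hf1 hf2 hle.
    by move: hf2; rewrite /oiter /= hcb.
  have k0 : keps = 0%N by lia.
  by subst keps; move: he2; rewrite /oiter /=.
have neq : forall b c, ebar b = Some c -> c != b.
  move=> b c hbc; apply/negP => /eqP hcb; subst c.
  have := Hw _ _ hbc 0%N (leq_trans (isT : (0 < 2)%N) n2); rewrite /=; lia.
pose tau b := if ebar b is Some c then c else odflt b (fbar b).
have tauK : involutive tau.
  move=> b; rewrite /tau; case E: (ebar b) => [c|].
    by rewrite (eN _ _ E) (proj1 (Hbar _ _) E).
  case F: (fbar b) => [c|] /=; last by rewrite E F.
  by rewrite (proj2 (Hbar _ _) F).
have Tsum : forall b, Tb wt (tau b) + Tb wt b =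
    if tau b == b then Tb wt b *+ 2 else 0.
  move=> b; rewrite /tau; case E: (ebar b) => [c|].
    rewrite (negPf (neq _ _ E)) (Tneg n2 (Hw _ _ E)); exact: addrN.
  case F: (fbar b) => [c|] /=; last by rewrite eqxx mulr2n.
  have E' := proj2 (Hbar _ _) F.
  rewrite eq_sym (negPf (neq _ _ E')) (Tneg n2 (Hw _ _ E')); exact: addNr.
have fix0 : forall b, tau b = b -> wtc wt b 0 = 0%N /\ wtc wt b 1 = 0%N.
  move=> b; rewrite /tau; case E: (ebar b) => [c|].
    by move=> hc; move: (neq _ _ E); rewrite hc eqxx.
  case F: (fbar b) => [c|] /=.
    move=> hc; have E' := proj2 (Hbar _ _) F; move: (neq _ _ E').
    by rewrite hc eqxx.
  move=> _; have [keps [kphi [[he1 he2] [hf1 hf2] hle himp]]] := Hstr b.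
  have k0 : keps = 0%N.
    case: keps he1 {he2 hle himp} => // k; rewrite oiterSr E //.
  have k1 : kphi = 0%N.
    case: kphi hf1 {hf2 hle himp} => // k; rewrite oiterSr F //.
  subst keps kphi.
  case: (boolP ((wtc wt b 0 != 0%N) || (wtc wt b 1 != 0%N))) => [/himp //|].
  by rewrite negb_or !negbK => /andP [/eqP -> /eqP ->].
have S2 : (character wt \mPo gamma_subst n) *+ 2 =
    (\sum_(b | tau b == b) Tb wt b) *+ 2.
  rewrite compE mulr2n [X in X + _](reindex_inj (inv_inj tauK)) -big_split /=.
  rewrite (eq_bigr _ (fun x _ => Tsum x)) -big_mkcond /=.
  by rewrite -sumrMnl.
have coef0 : (\sum_(b | tau b == b) Tb wt b)@_m = 0.
  rewrite raddf_sum /=; apply: big1 => b /eqP hb.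
  have [h0 h1] := fix0 b hb.
  rewrite Tfix // mcoeffX.
  case: eqP => // hmb; exfalso; move: hmj; rewrite -hmb /monb mnmE.
  by case: j hj => [[|[|k]] hk] //= _; rewrite ?h0 ?h1.
rewrite mcoeff_msupp negbK; apply/eqP.
have := congr1 (mcoeff m) S2; rewrite !raddfMn /= coef0 mul0rn.
by move/eqP; rewrite mulrn_eq0 /= => /eqP.
Qed.

Local Close Scope ring_scope.
Unset Implicit Arguments.

Theorem proposition2p5 (n : nat) (B : finType) (wt : B -> n.-tuple nat)
    (e f : nat -> B -> option B) (ebar fbar : B -> option B) :
  (1 <= n)%N -> is_q_crystal wt e f ebar fbar -> Gamma (character wt).
Proof.
move=> n1 [Hgl Hq]; split.
  exact: (char_sym Hgl).
move=> n2; have [Hbar Hw _ Hstr] := Hq n2.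
apply: (gamma2 n2 Hbar _ Hstr).
by move=> b c h j hj; exact: (proj1 (Hw b c h) j hj).
Qed.
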